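(* Let $T$ be a plane labelled bipartite tree with $n$ white and $m$ black vertices, where $n+m$ is even. Fix a white vertex $v_i$ as root vertex. Then the value $i(T)\in\{0,1\}$, computed from the string $c(T)$ built with root vertex $v_i$ and root edge $e$, is the same for every choice of the root edge $e$ among the edges incident to $v_i$.
   Context: A plane labelled bipartite tree with $n$ white and $m$ black vertices is defined as follows. It is a finite tree embedded in the oriented plane, considered up to orientation-preserving homeomorphism. Its vertices are colored white and black so that adjacent vertices have different colors. The white vertices carry the distinct labels $v_1,\dots,v_n$ and the black vertices the distinct labels $u_1,\dots,u_m$. String $c(T)$: choose a white vertex $v_i$ (the root vertex) and an edge $e$ incident to it (the root edge). Walk counterclockwise around $T$, i.e. perform the contour walk around the tree keeping the tree on the left, starting at $v_i$ and first traversing $e$, until returning to $v_i$ after all edges have been traversed twice. Whenever a vertex is met for the first time, write its label. Whenever a vertex is met for the last time, write a closing bracket '')''. For example, for the path $v_1-u_1-v_2-u_2$ rooted at $v_1$, $c(T)=v_1u_1v_2u_2))))$. The string contains $n+m$ labels and $n+m$ brackets. Invariant: let - $a$ be the number of pairs of white labels $v_k,v_l$ with $v_k$ occurring before $v_l$ in $c(T)$ and $k>l$; - $b$ be the analogous number of inversions among black labels $u_k$; - $c$ be the number of pairs (black label $u$, white label $v$) with $u$ occurring before $v$ in $c(T)$; - $d$ be the number of pairs (closing bracket, label) with the bracket occurring before the label in $c(T)$; - $e_0=|n-m|/2$. Then $i(T)\in\{0,1\}$ is defined by $i(T)\equiv a+b+c+\tfrac{d+e_0}{2}\pmod 2$.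 The tree is called even if $i(T)=0$ and odd if $i(T)=1$. *)

(* Defs.v *)
From mathcomp Require Import all_boot.
Set Implicit Arguments. Unset Strict Implicit. Unset Printing Implicit Defensive.

(* A plane labelled bipartite tree is encoded as a combinatorial map on a
   finite set of darts D (each edge = two darts):
   - [alpha] : fixed-point-free involution exchanging the two darts of an edge;
   - [sigma] : rotation, sending a dart to the next dart (counterclockwise)
     around its origin vertex;
   - [vert d] : the label of the origin vertex of d, white labels [inl k]
     (v_(k+1), k : 'I_n) and black labels [inr k] (u_(k+1), k : 'I_m).
   Vertices are the sigma-orbits; a connected map with #V = #E + 1 is a tree,
   and its embedding is planar (Euler: one face, genus 0). *)

Definition is_white n m (x : 'I_n + 'I_m) : bool :=
  if x is inl _ then true else false.

Definition is_plane_btree (n m : nat) (D : finType) (sigma alpha : D -> D)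
    (vert : D -> 'I_n + 'I_m) : Prop :=
  [/\ injective sigma,
      (forall d, alpha (alpha d) = d /\ alpha d != d),
      (forall d, vert (sigma d) = vert d) &
   [/\
      (forall d d', vert d = vert d' -> fconnect sigma d d'),
      (forall x, exists d, vert d = x),
      (forall d, is_white (vert (alpha d)) = ~~ is_white (vert d)),
      (forall d d', connect (fun x y => (y == sigma x) || (y == alpha x)) d d')
    & n + m = (#|D|)./2 + 1]].

Section Contour.
Variables (n m : nat) (D : finType) (sigma alpha : D -> D)
          (vert : D -> 'I_n + 'I_m).

(* Contour walk starting with dart d0 (root vertex vert d0, root edge the edge
   of d0): after traversing dart d we arrive at vert (alpha d) and continue
   with the next dart sigma (alpha d). *)
Definition walk_darts (d0 : D) : seq D :=
  traject (fun d => sigma (alpha d)) d0 #|D|.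

Definition walk_visits (d0 : D) : seq ('I_n + 'I_m) :=
  vert d0 :: [seq vert (alpha d) | d <- walk_darts d0].

(* the string c(T): [Some x] = label x, [None] = closing bracket ")" *)
Definition cstring (d0 : D) : seq (option ('I_n + 'I_m)) :=
  let s := walk_visits d0 in
  flatten [seq let x := nth (vert d0) s p in
               (if x \notin take p s then [:: Some x] else [::]) ++
               (if x \notin drop p.+1 s then [:: None] else [::])
          | p <- iota 0 (size s)].

Definition count_pairs (f : option ('I_n + 'I_m) -> option ('I_n + 'I_m) -> bool)
    (s : seq (option ('I_n + 'I_m))) : nat :=
  \sum_(q < size s) \sum_(p < q) f (nth None s p) (nth None s q).

Definition inv_white (x y : option ('I_n + 'I_m)) : bool :=
  match x, y with Some (inl k), Some (inl l) => l < k | _, _ => false end.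
Definition inv_black (x y : option ('I_n + 'I_m)) : bool :=
  match x, y with Some (inr k), Some (inr l) => l < k | _, _ => false end.
Definition black_white (x y : option ('I_n + 'I_m)) : bool :=
  match x, y with Some (inr _), Some (inl _) => true | _, _ => false end.
Definition bracket_label (x y : option ('I_n + 'I_m)) : bool :=
  match x, y with None, Some _ => true | _, _ => false end.

Definition iT (d0 : D) : bool :=
  let s := cstring d0 in
  let a := count_pairs inv_white s in
  let b := count_pairs inv_black s in
  let c := count_pairs black_white s in
  let d := count_pairs bracket_label s in
  let e0 := (n - m + (m - n))./2 in
  odd (a + b + c + (d + e0)./2).

End Contour.

(* Main.v *)
Require Import Defs.
From mathcomp Require Import all_boot.
From mathcomp Require Import fingroup perm zify.
Set Implicit Arguments. Unset Strict Implicit. Unset Printing Implicit Defensive.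

Section RH.
Variable T : finType.

Definition erel (s a : {perm T}) : rel T := relU (frel s) (frel a).

Lemma erel_sym s a : connect_sym (erel s a).
Proof.
apply: relU_sym; move=> x y; apply: fconnect_sym; exact: perm_inj.
Qed.

Lemma connect_closedP (e : rel T) (P : pred T) z w :
  (forall u v, P u -> e u v -> P v) -> P z -> connect e z w -> P w.
Proof.
move=> cl Pz /connectP[p ep ->]; elim: p z Pz ep => //= u p IH z Pz /andP[ezu pu].
exact: (IH u (cl _ _ Pz ezu)).
Qed.

Lemma ncomp_step (s a a' : {perm T}) x y :
  a x = y -> a' x = x -> a' y = y ->
  (forall z, z != x -> z != y -> a' z = a z) ->
  n_comp (erel s a) T + ~~ connect (erel s a') x y = n_comp (erel s a') T.
Proof.
move=> axy a'x a'y a'z.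
set e := erel s a; set e' := erel s a'.
have symE := erel_sym s a; have symE' := erel_sym s a'.
have sub : forall u v, connect e' u v -> connect e u v.
  apply: connect_sub => u v /orP[/eqP<-|/eqP<-]; first by apply: connect1; rewrite /e /erel /= eqxx.
  have [->|ux] := eqVneq u x; first by rewrite a'x.
  have [->|uy] := eqVneq u y; first by rewrite a'y.
  by apply: connect1; rewrite /e /erel /= a'z // eqxx orbT.
set C := closure e' (pred2 x y).
have notC : forall z, z \notin C -> connect e z =1 connect e' z.
  move=> z zC w; apply/idP/idP; last exact: sub.
  apply: (connect_closedP (P := connect e' z)) => // u v zu /orP[/eqP<-|/eqP<-].
    by apply: connect_trans zu (connect1 _); rewrite /e' /erel /= eqxx.
  have ux : u != x.
    apply: contraNneq zC => ux; apply/pred0Pn; exists x.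
    by rewrite !inE /= -ux zu eqxx.
  have uy : u != y.
    apply: contraNneq zC => uy; apply/pred0Pn; exists y.
    by rewrite !inE /= -uy zu eqxx orbT.
  by apply: connect_trans zu (connect1 _); rewrite /e' /erel /= a'z // eqxx orbT.
have Ceq : closure e (pred2 x y) =i C.
  move=> z; apply/idP/idP; last first.
    case/pred0Pn=> w /andP[/= zw xyw]; apply/pred0Pn; exists w.
    by rewrite /= xyw andbT; apply: sub.
  apply: contraLR => zC; apply/pred0Pn => -[w /andP[/= zw xyw]].
  have zw' : connect e' z w by rewrite -(notC z zC w).
  move/negP: zC; apply; apply/pred0Pn; exists w; by rewrite /= xyw andbT.
rewrite (n_compC C) (n_compC C e').
have -> : n_comp e C = 1.
  rewrite -(eq_n_comp_r Ceq) n_comp_closure2 //.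
  by rewrite (connect1 (_ : e x y)) // /e /erel /= axy eqxx orbT.
rewrite {3}/C (n_comp_closure2 symE').
have -> : n_comp e [predC C] = n_comp e' [predC C].
  apply: eq_card => z; rewrite !inE.
  case zC: (z \in C) => /=; rewrite ?andbF ?andbT //.
  by rewrite /roots /root (eq_pick (notC z (negbT zC))).
rewrite /C /e'; lia.
Qed.

Lemma porbits_ncomp s : #|porbits s| <= n_comp (erel s 1) T.
Proof.
set e := erel s 1.
have cl : forall x y, connect e x y -> porbit s y = porbit s x.
  move=> x y xy; apply/eqP; rewrite eq_porbit_mem.
  apply: (connect_closedP (P := [pred u | u \in porbit s x])) xy => //=; last exact: porbit_id.
  move=> u v /porbitP[i ->] /orP[/eqP<-|/eqP<-]; apply/porbitP.
    by exists i.+1; rewrite expgSr permM.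
  by exists i; rewrite perm1.
apply: (@leq_trans #|[set porbit s r | r in roots e]|).
  apply: subset_leq_card; apply/subsetP => O /imsetP[x _ ->]; apply/imsetP.
  exists (root e x); first by rewrite inE roots_root //; apply: erel_sym.
  by rewrite (cl x (root e x)) // connect_root.
apply: leq_trans (leq_imset_card _ _) _.
by rewrite /n_comp_mem; apply: subset_leq_card; apply/subsetP => z; rewrite !inE andbT.
Qed.

Lemma RH s : forall K (a : {perm T}), (forall x, a (a x) = x) ->
  #|[pred x | a x != x]| = K ->
  exists k, K = k.*2 /\ #|porbits s| + (#|T| - k) + #|porbits (a * s)%g|
                        <= #|T| + (n_comp (erel s a) T).*2.
Proof.
elim/ltn_ind => K IH a inv_a cardK.
case: (posnP K) => [K0|Kpos].
  exists 0; split; first by rewrite K0.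
  have a1 : a = 1%g.
    apply/permP => z; rewrite perm1; apply/eqP; apply: contraT => az.
    have := card0_eq (etrans cardK K0) z; by rewrite !inE /= az.
  rewrite a1 mul1g subn0; have := porbits_ncomp s; lia.
have [x ax] : exists x, a x != x.
  by move: Kpos; rewrite -cardK => /card_gt0P[x]; rewrite inE => ?; exists x.
set y := a x.
have xy : x != y by rewrite eq_sym.
pose a' := (tperm x y * a)%g.
have a'x : a' x = x by rewrite permM tpermL /y inv_a.
have a'y : a' y = y by rewrite permM tpermR.
have a'z : forall z, z != x -> z != y -> a' z = a z.
  by move=> z zx zy; rewrite permM tpermD // eq_sym.
have inv' : forall z, a' (a' z) = z.
  move=> z; have [->|zx] := eqVneq z x; first by rewrite !a'x.
  have [->|zy] := eqVneq z y; first by rewrite !a'y.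
  rewrite (a'z z) // a'z ?inv_a //.
    by apply: contra_neq zy => azx; rewrite -(inv_a z) azx.
  by apply: contra_neq zx => azy; rewrite -(inv_a z) azy /y inv_a.
have cardA : #|[pred z | a z != z]| =
    #|[predD1 [predD1 [pred z | a z != z] & x] & a x]| + 2.
  move: (cardD1 x [pred z | a z != z]) (cardD1 (a x) [predD1 [pred z | a z != z] & x]).
  rewrite !inE /= ax inv_a eq_sym ax /= => -> ->; by rewrite addnA addnC.
have card' : #|[pred z | a' z != z]| = K - 2.
  have -> : #|[pred z | a' z != z]| = #|[predD1 [predD1 [pred z | a z != z] & x] & a x]|.
    apply: eq_card => z; rewrite !inE /=.
    have [->|zx] := eqVneq z x; first by rewrite a'x eqxx andbF.
    have [->|zy] := eqVneq z (a x); first by rewrite a'y eqxx.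
    by rewrite a'z.
  lia.
have := IH (K - 2) _ a' inv' card'.
case=> [|k' [Kk' ineq]]; first by lia.
have K2 : 2 <= K.
  lia.
exists k'.+1; split; first by rewrite doubleS -Kk'; lia.
have Pas : #|porbits (a * s)%g| + (x \notin porbit (a' * s)%g y).*2
           = #|porbits (a' * s)%g| + (x != y).
  have -> : (a * s = tperm x y * (a' * s))%g.
    by rewrite /a' !mulgA tperm2 mul1g.
  exact: porbits_mul_tperm.
have ncs := ncomp_step s (erefl : a x = y) a'x a'y a'z.
have link : x \in porbit (a' * s)%g y -> connect (erel s a') x y.
  case/porbitP=> i ->; rewrite erel_sym.
  elim: i => [|i IHi]; first by rewrite expg0 perm1.
  rewrite expgSr permM; apply: connect_trans IHi _.
  set u := ((a' * s) ^+ i)%g y.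
  apply: (@connect_trans _ _ (a' u)); apply: connect1;
    by rewrite /erel /= ?permM eqxx ?orbT.
have Tk : k'.+1 <= #|T|.
  have : K <= #|T| by rewrite -cardK; apply: max_card.
  lia.
move: Pas ncs ineq Tk; rewrite xy -!muln2.
set P1 := #|porbits (a * s)|; set P2 := #|porbits (a' * s)|.
set NC := n_comp (erel s a) T; set NC' := n_comp (erel s a') T.
set N := #|T|; set S := #|porbits s|.
case: (boolP (x \in porbit _ y)) => [xin|xout].
  by rewrite (link xin) /=; lia.
case: (connect _ x y) => /=; lia.
Qed.
End RH.

Section Str.
Variables n m : nat.
Local Notation L := ('I_n + 'I_m)%type.
Local Notation O := (option L).
Local Notation bl := (@bracket_label n m).
Local Notation iw := (@inv_white n m).
Local Notation ib := (@inv_black n m).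
Local Notation bw := (@black_white n m).

Definition em (pre : seq L) (x : L) (post : seq L) : seq O :=
  (if x \notin pre then [:: Some x] else [::]) ++
  (if x \notin post then [:: None] else [::]).

Fixpoint cz (pre : seq L) (s : seq L) (post : seq L) : seq O :=
  if s is x :: s' then em pre x (s' ++ post) ++ cz (rcons pre x) s' post else [::].

Definition cs (x0 : L) (s : seq L) : seq O :=
  flatten [seq let x := nth x0 s p in
               (if x \notin take p s then [:: Some x] else [::]) ++
               (if x \notin drop p.+1 s then [:: None] else [::])
          | p <- iota 0 (size s)].

Lemma cs_gen x0 post s : forall pre,
  flatten [seq em (pre ++ take p s) (nth x0 s p) (drop p.+1 s ++ post)
          | p <- iota 0 (size s)] = cz pre s post.
Proof.
elim: s => [//|x s IH] pre /=.
rewrite cats0 drop0 -(IH (rcons pre x)) -[1]addn0 iotaDl -map_comp.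
congr (_ ++ flatten _); apply: eq_map => p /=.
by rewrite cat_rcons.
Qed.

Lemma cs_cz x0 s : cs x0 s = cz [::] s [::].
Proof.
rewrite -(cs_gen x0) /cs; congr flatten; apply: eq_map => p.
by rewrite cat0s cats0.
Qed.

Lemma cz_cat X Y : forall pre post,
  cz pre (X ++ Y) post = cz pre X (Y ++ post) ++ cz (pre ++ X) Y post.
Proof.
elim: X => [|x X IH] pre post /=; first by rewrite cats0.
by rewrite IH catA cat_rcons catA.
Qed.

Lemma cz_eq X : forall pre pre' post post',
  {in X, forall z, (z \in pre) = (z \in pre')} ->
  {in X, forall z, (z \in post) = (z \in post')} ->
  cz pre X post = cz pre' X post'.
Proof.
elim: X => [//|x X IH] pre pre' post post' Hpre Hpost /=.
rewrite /em !mem_cat Hpre ?mem_head // Hpost ?mem_head //.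
congr (_ ++ _); apply: IH => z zX.
  by rewrite !mem_rcons !inE Hpre // inE zX orbT.
by rewrite Hpost // inE zX orbT.
Qed.

Lemma cz_decomp (v : L) A B :
  (forall z, z \in A -> z \in B -> z = v) ->
  cz [::] (v :: A ++ v :: B ++ [:: v]) [::] =
  Some v :: cz [:: v] A [:: v] ++ cz [:: v] B [:: v] ++ [:: None].
Proof.
move=> disj /=.
rewrite /em /= !mem_cat !inE eqxx !orbT /=.
rewrite cz_cat /=.
rewrite /em inE eqxx /= !cats0 mem_cat mem_seq1 eqxx orbT /=.
rewrite cz_cat /= /em /= inE eqxx /=.
congr (_ :: _ ++ _).
  apply: cz_eq => // z zA; rewrite in_cons mem_cat mem_seq1.
  case: (boolP (z \in B)) => [zB|zB]; first by rewrite (disj z zA zB) eqxx.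
  by case: (z == v).
congr (_ ++ _).
apply: cz_eq => // z zB; rewrite in_cons mem_rcons in_cons mem_seq1.
case: (boolP (z \in A)) => [zA|zA]; first by rewrite (disj z zA zB) eqxx.
by case: (z == v).
Qed.


Definition isN (o : O) := ~~ isSome o.

Lemma cz_some X : forall pre post z,
  Some z \in cz pre X post -> (z \in X) && (z \notin pre).
Proof.
elim: X => [//|x X IH] pre post z /=; rewrite mem_cat => /orP[].
  rewrite /em mem_cat; case: ifP => [xpre|_]; last first.
    by case: ifP => //; rewrite inE.
  rewrite inE => /orP[/eqP[->]|]; first by rewrite mem_head.
  by case: ifP => //; rewrite inE.
move/IH => /andP[zX]; rewrite mem_rcons in_cons negb_or => /andP[_ ->].
by rewrite in_cons zX orbT.
Qed.

Lemma cz_cntS X : forall pre post,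
  count isSome (cz pre X post) = #|[set z | (z \in X) && (z \notin pre)]|.
Proof.
elim: X => [|x X IH] pre post /=.
  by rewrite -(cards0 L); congr #|_|; apply/setP => z; rewrite !inE.
rewrite count_cat IH.
set S := [set z | _ & _].
have -> : count isSome (em pre x (X ++ post)) = (x \notin pre).
  by rewrite /em; case: ifP; case: ifP.
case: (boolP (x \in pre)) => xpre /=.
  apply: eq_card => z; rewrite !inE ?mem_rcons ?in_cons ?inE.
  by case: (eqVneq z x) => [->|]; rewrite ?xpre ?andbF.
have -> : [set z | (z \in x :: X) && (z \notin pre)] = x |: S.
  apply/setP => z; rewrite !inE ?mem_rcons ?in_cons ?inE.
  by case: (eqVneq z x) => [->|]; rewrite ?xpre.
by rewrite cardsU1 !inE mem_rcons mem_head andbF.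
Qed.

Lemma cz_cntN X : forall pre post,
  count isN (cz pre X post) = #|[set z | (z \in X) && (z \notin post)]|.
Proof.
elim: X => [|x X IH] pre post /=.
  by rewrite -(cards0 L); congr #|_|; apply/setP => z; rewrite !inE.
rewrite count_cat IH.
set S := [set z | _ & _].
have -> : count isN (em pre x (X ++ post)) = (x \notin X ++ post).
  by rewrite /em; case: ifP; case: ifP.
rewrite mem_cat negb_or.
case: (boolP (x \in X)) => xX /=.
  apply: eq_card => z; rewrite !inE ?in_cons.
  by case: (eqVneq z x) => [->|]; rewrite ?xX.
case: (boolP (x \in post)) => xp /=.
  apply: eq_card => z; rewrite !inE ?in_cons.
  by case: (eqVneq z x) => [->|]; rewrite ?xp ?andbF.
have -> : [set z | (z \in x :: X) && (z \notin post)] = x |: S.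
  apply/setP => z; rewrite !inE ?in_cons.
  by case: (eqVneq z x) => [->|]; rewrite ?xp ?xX.
by rewrite cardsU1 !inE (negbTE xX).
Qed.


Fixpoint cp (f : O -> O -> bool) (s : seq O) : nat :=
  if s is x :: s' then count (f x) s' + cp f s' else 0.

Lemma count_nth (a : pred O) (s : seq O) :
  count a s = \sum_(i < size s) a (nth None s i).
Proof.
rewrite -sum1_count big_mkcond (big_nth None) big_mkord.
by apply: eq_bigr => i _; case: (a _).
Qed.

Lemma count_pairs_cp f s : count_pairs f s = cp f s.
Proof.
elim: s => [|x s IH]; first by rewrite /count_pairs big_ord0.
rewrite /count_pairs /= big_ord_recl big_ord0 add0n -IH /count_pairs.
rewrite (count_nth (f x)) -big_split /=.
apply: eq_bigr => i _; by rewrite big_ord_recl.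
Qed.

Definition crs (f : O -> O -> bool) (X Y : seq O) : nat :=
  \sum_(x <- X) count (f x) Y.

Lemma cp_cat f X Y : cp f (X ++ Y) = cp f X + cp f Y + crs f X Y.
Proof.
elim: X => [|x X IH] /=; first by rewrite /crs big_nil addn0.
rewrite IH /crs big_cons count_cat; lia.
Qed.

Lemma crs_catr f X Y Z : crs f X (Y ++ Z) = crs f X Y + crs f X Z.
Proof. by rewrite /crs -big_split; apply: eq_bigr => x _; rewrite count_cat. Qed.

Lemma cp_swap f a0 z X Y :
  cp f (a0 :: X ++ Y ++ [:: z]) + crs f Y X = cp f (a0 :: Y ++ X ++ [:: z]) + crs f X Y.
Proof.
rewrite /= !cp_cat !crs_catr !count_cat.
set c1 := count _ X; set c2 := count _ Y; lia.
Qed.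

Lemma crs_bl X Y : crs bl X Y = count isN X * count isSome Y.
Proof.
elim: X => [|x X IH]; first by rewrite /crs big_nil.
rewrite /crs big_cons -/(crs _ X Y) IH /=; case: x => [x|] /=.
  by rewrite (eq_count (a2 := pred0)) ?count_pred0 // => y; case: y.
by rewrite (@eq_count _ _ isSome) // => y; case: y.
Qed.

Lemma pair_sum (x y : O) : (x = y -> x = None) ->
  iw x y + ib x y + bw x y +
  (iw y x + ib y x + bw y x) = isSome x * isSome y.
Proof.
case: x => [[k|k]|] //; case: y => [[l|l]|] //= H.
- have kl : val k != val l by apply/eqP => /val_inj kl; subst l; have := H erefl.
  by move: kl; rewrite /=; case: (ltngtP k l).
- have kl : val k != val l by apply/eqP => /val_inj kl; subst l; have := H erefl.
  by move: kl; rewrite /=; case: (ltngtP k l).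
Qed.

Lemma crs_sum f X Y : crs f X Y = \sum_(x <- X) \sum_(y <- Y) f x y.
Proof.
apply: eq_bigr => x _.
by rewrite -sum1_count big_mkcond; apply: eq_bigr => y _; case: (f x y).
Qed.

Lemma crsG X Y : (forall o, o \in X -> o \in Y -> o = None) ->
  crs iw X Y + crs ib X Y + crs bw X Y +
  (crs iw Y X + crs ib Y X + crs bw Y X) =
  count isSome X * count isSome Y.
Proof.
move=> disj.
rewrite !crs_sum ![\sum_(x <- Y) _](exchange_big) /= -!big_split /=.
have cntE : forall (a : pred O) s, count a s = \sum_(y <- s) a y.
  by move=> a s; rewrite -sum1_count big_mkcond; apply: eq_bigr => y _; case: (a y).
rewrite cntE big_distrl /=; apply: eq_big_seq => x xX.
rewrite cntE big_distrr /= -!big_split /=; apply: eq_big_seq => y yY.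
by apply: pair_sum => xy; apply: disj => //; rewrite xy.
Qed.


Definition iTs (s : seq O) : bool :=
  let a := count_pairs iw s in
  let b := count_pairs ib s in
  let c := count_pairs bw s in
  let d := count_pairs bl s in
  let e0 := (n - m + (m - n))./2 in
  odd (a + b + c + (d + e0)./2).

Lemma iTs_swap v X Y : (forall o, o \in X -> o \in Y -> o = None) ->
  count isN X = count isSome X -> count isN Y = count isSome Y ->
  ~~ odd (count isSome X * count isSome Y) ->
  iTs (Some v :: X ++ Y ++ [:: None]) = iTs (Some v :: Y ++ X ++ [:: None]).
Proof.
move=> disj hX hY hodd.
rewrite /iTs !count_pairs_cp.
have dd : cp bl (Some v :: X ++ Y ++ [:: None]) = cp bl (Some v :: Y ++ X ++ [:: None]).
  have := cp_swap bl (Some v) None X Y; rewrite !crs_bl hX hY [count isSome Y * _]mulnC; by move/addIn.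
rewrite dd.
have s1 := cp_swap iw (Some v) None X Y.
have s2 := cp_swap ib (Some v) None X Y.
have s3 := cp_swap bw (Some v) None X Y.
have hG := crsG disj.
set A := cp iw _ in s1 *; set A' := cp iw _ in s1 *.
set B := cp ib _ in s2 *; set B' := cp ib _ in s2 *.
set C := cp bw _ in s3 *; set C' := cp bw _ in s3 *.
set P := crs iw X Y + crs ib X Y + crs bw X Y in hG.
set Q := crs iw Y X + crs ib Y X + crs bw Y X in hG.
have e1 : (A + B + C) + (P + Q) = (A' + B' + C') + (P + P).
  rewrite /P /Q; lia.
move: e1; rewrite hG addnn => /(congr1 odd); rewrite !oddD odd_double (negbTE hodd) !addbF.
by move=> ->.
Qed.

End Str.

Section Main.
Variables (n m : nat) (D : finType) (sigma alpha : D -> D)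
          (vert : D -> 'I_n + 'I_m).
Hypothesis injs : injective sigma.
Hypothesis ainv : forall d, alpha (alpha d) = d /\ alpha d != d.
Hypothesis vsig : forall d, vert (sigma d) = vert d.
Hypothesis vconn : forall d d', vert d = vert d' -> fconnect sigma d d'.
Hypothesis vsurj : forall x, exists d, vert d = x.
Hypothesis conn : forall d d', connect (fun x y => (y == sigma x) || (y == alpha x)) d d'.
Hypothesis card : n + m = (#|D|)./2 + 1.

Let f := fun d => sigma (alpha d).
Let inja : injective alpha.
Proof. by apply: (can_inj (g := alpha)) => d; case: (ainv d). Qed.
Let injf : injective f.
Proof. by move=> x y /injs /inja. Qed.
Let sig := perm injs.
Let alp := perm inja.
Let F := (alp * sig)%g.
Let FE : forall d, F d = f d.
Proof. by move=> d; rewrite permM !permE. Qed.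
Let alpinv : forall d, alp (alp d) = d.
Proof. by move=> d; rewrite !permE; case: (ainv d). Qed.

Lemma vert_iter_sig i d : vert (iter i sigma d) = vert d.
Proof. by elim: i => //= i IH; rewrite vsig. Qed.

Lemma nc_le1 (s a : {perm D}) d :
  (forall z, connect (erel s a) d z) -> n_comp (erel s a) D <= 1.
Proof.
move=> cz; apply/card_le1_eqP => x y; rewrite !inE !andbT => rx ry.
have sym := erel_sym s a.
rewrite -(eqP rx) -(eqP ry); apply/(rootP sym).
apply: (connect_trans (_ : connect _ y d) (cz x)); by rewrite sym.
Qed.

Lemma porbit_sig d : porbit sig d = [set d' | vert d' == vert d].
Proof.
apply/setP => d'; rewrite inE; apply/porbitP/eqP => [[i ->]|vd].
  by rewrite permX (eq_iter (permE injs)) vert_iter_sig.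
exists (findex sigma d d'); rewrite permX (eq_iter (permE injs)) iter_findex //.
exact: vconn.
Qed.

Lemma Ps_eq : #|porbits sig| = n + m.
Proof.
rewrite /porbits (eq_imset _ porbit_sig).
rewrite (imset_comp (fun l => [set d' | vert d' == l]) vert).
rewrite card_in_imset; last first.
  move=> l1 l2 /imsetP[d1 _ ->] _ /setP/(_ d1); rewrite !inE eqxx.
  by move/esym/eqP.
have -> : vert @: D = [set: 'I_n + 'I_m].
  apply/setP => x; rewrite inE; have [d <-] := vsurj x; exact: imset_f.
by rewrite cardsT card_sum !card_ord.
Qed.


Lemma moved_alp : #|[pred x | alp x != x]| = #|D|.
Proof. by apply: eq_card => x; rewrite !inE permE; case: (ainv x). Qed.

Lemma conn_e (s : {perm D}) d d' : s =1 sigma -> connect (erel s alp) d d'.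
Proof.
move=> sE; rewrite (eq_connect (e' := (fun x y => (y == sigma x) || (y == alpha x)))) //.
by move=> x y; rewrite /erel /= sE permE !(eq_sym y).
Qed.

Lemma F1 d0 d : fconnect f d0 d.
Proof.
have [k [Nk ineq]] := RH sig alpinv moved_alp.
have nc := nc_le1 (fun z => conn_e d0 z (permE injs)).
rewrite Ps_eq card Nk half_double in ineq.
have PF : #|porbits F| <= 1.
  move: ineq nc; rewrite -!muln2; set a := #|porbits _|; set b := n_comp _ _; lia.
have : porbit F d = porbit F d0.
  by move/card_le1_eqP: PF; apply; apply: imset_f.
move/setP/(_ d); rewrite porbit_id => /esym/porbitP[i ->].
by rewrite permX (eq_iter FE); apply: fconnect_iter.
Qed.


Lemma order_N d : fingraph.order f d = #|D|.
Proof. by apply: eq_card => z; rewrite !inE /= F1. Qed.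

Lemma iterN d : iter #|D| f d = d.
Proof. by rewrite -(order_N d) iter_order. Qed.

Lemma uniqW d : uniq (traject f d #|D|).
Proof. by rewrite -(order_N d); apply: orbit_uniq. Qed.

Lemma inW d d' : d' \in traject f d #|D|.
Proof. by rewrite -(order_N d) -fconnect_orbit F1. Qed.

Lemma Winj d i i' : i < #|D| -> i' < #|D| -> iter i f d = iter i' f d -> i = i'.
Proof.
move=> iN i'N; rewrite -(nth_traject f iN d) -(nth_traject f i'N d) => /eqP.
by rewrite nth_uniq ?size_traject ?uniqW // => /eqP.
Qed.

Lemma inF a b : a \in porbit F b.
Proof.
apply/porbitP; exists (findex f b a).
by rewrite permX (eq_iter FE) iter_findex // F1.
Qed.

Lemma PF1 (d0 : D) : #|porbits F| = 1.
Proof.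
have -> : porbits F = [set porbit F d0].
  apply/setP => O; rewrite inE; apply/imsetP/eqP => [[z _ ->]|->]; last by exists d0.
  by apply/eqP; rewrite eq_porbit_mem inF.
by rewrite cards1.
Qed.


Lemma F2 d0 k j l : 0 < k -> k < #|D| -> vert (iter k f d0) = vert d0 ->
  j < k -> k <= l -> l < #|D| ->
  vert (iter j f d0) = vert (iter l f d0) -> vert (iter j f d0) = vert d0.
Proof.
move=> k0 kN vk jk kl lN vjl.
apply/eqP; apply: contraT => vj.
set N := #|D| in kN lN.
set W := fun i => iter i f d0.
have WS : forall i, W i.+1 = f (W i) by [].
have Wne : forall i i', i < N -> i' < N -> i != i' -> W i != W i'.
  by move=> i i' iN i'N; apply: contra_neq; apply: Winj.
set x := W k.-1; set y := W N.-1.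
have fx : f x = W k by rewrite /x -WS prednK.
have fy : f y = d0.
  rewrite /y -WS prednK; first exact: iterN.
  lia.
have xy : x != y.
  apply: Wne; lia.
set p := alp x; set q := alp y.
have sp : sigma p = W k by rewrite /p permE.
have sq : sigma q = d0 by rewrite /q permE.
have vp : vert p = vert d0 by rewrite -vsig sp.
have vq : vert q = vert d0 by rewrite -vsig sq.
have pq : p != q by rewrite /p /q (inj_eq (@perm_inj _ alp)).
have pinq : p \in porbit sig q by rewrite porbit_sig inE vp vq.
pose sig' := (tperm p q * sig)%g.
have Ps' : #|porbits sig'| = n + m + 1.
  by have := porbits_mul_tperm sig p q; rewrite pinq pq Ps_eq /= addn0.
pose g := (alp * sig')%g.
have gE : g = (tperm x y * F)%g.
  by rewrite /g /sig' /p /q -tpermJ conjgE !mulgA mulgV mul1g.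
have Pg : #|porbits g| = 2.
  by move: (porbits_mul_tperm F x y) => /=; rewrite -gE inF xy (PF1 d0) /= addn0.
have [k' [Nk ineq]] := RH sig' alpinv moved_alp.
set e' := erel sig' alp.
have gstep : forall z, connect e' z (g z).
  move=> z; apply: (@connect_trans _ _ (alp z)); apply: connect1;
  by rewrite /e' /erel /= ?permM eqxx ?orbT.
have gf : forall z, z != x -> z != y -> g z = f z.
  by move=> z zx zy; rewrite gE permM tpermD 1?eq_sym // FE.
have c1 : forall i, i < k -> connect e' d0 (W i).
  elim=> [//|i IH] ik.
  apply: connect_trans (IH (ltnW ik)) _; rewrite WS -gf ?gstep //.
    apply: Wne; lia.
  apply: Wne; lia.
have c2 : forall i, k + i < N -> connect e' (W k) (W (k + i)).
  elim=> [|i IH] ki; first by rewrite addn0.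
  have ki' : k + i < N by lia.
  apply: connect_trans (IH ki') _.
  rewrite addnS WS -gf ?gstep //.
    apply: Wne; lia.
  apply: Wne; lia.
have c3 : connect e' (W j) (W l).
  have := iter_findex (vconn vjl); rewrite -/(W j) -/(W l).
  set i := findex _ _ _ => <-.
  elim: i => [//|i IH]; apply: connect_trans IH _; apply: connect1.
  set u := iter i sigma (W j).
  have vu : vert u = vert (W j) by rewrite /u vert_iter_sig.
  have up : u != p by apply: contraNneq vj => up; rewrite -/(W j) -vu up vp.
  have uq : u != q by apply: contraNneq vj => uq; rewrite -/(W j) -vu uq vq.
  by rewrite /e' /erel /= /sig' permM tpermD 1?eq_sym // permE eqxx.
have allc : forall z, connect e' d0 z.
  move=> z; have /trajectP[i iN ->] := inW d0 z; rewrite -/(W i).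
  case: (ltnP i k) => [ik|ki]; first exact: c1.
  have symE := erel_sym sig' alp.
  apply: connect_trans (c1 j jk) _; apply: connect_trans c3 _.
  have -> : i = k + (i - k) by lia.
  have lk : k + (l - k) < N by lia.
  apply: (connect_trans (_ : connect e' (W l) (W k))) (c2 _ _); last by lia.
  by rewrite symE; have := c2 _ lk; rewrite subnKC.
have nc := nc_le1 allc.
rewrite Ps' Pg card Nk half_double in ineq.
move: ineq nc; rewrite -!muln2; set b := n_comp _ _; lia.
Qed.


Lemma map_traject x k : map f (traject f x k) = traject f (f x) k.
Proof. by elim: k x => //= k IH x; rewrite IH. Qed.

Lemma walkE d : walk_visits sigma alpha vert d = rcons (map vert (traject f d #|D|)) (vert d).
Proof.
rewrite /walk_visits /walk_darts -/f.
have -> : [seq vert (alpha z) | z <- traject f d #|D|] = map vert (map f (traject f d #|D|)).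
  by rewrite -map_comp; apply: eq_map => z /=; rewrite vsig.
by rewrite map_traject -map_cons -trajectS trajectSr map_rcons iterN.
Qed.

Lemma iTE d : iT sigma alpha vert d = iTs (cz [::] (walk_visits sigma alpha vert d) [::]).
Proof. by rewrite -(cs_cz (vert d)). Qed.

Lemma main_sec d0 d1 : ~~ odd (n + m) -> vert d0 = vert d1 ->
  iT sigma alpha vert d0 = iT sigma alpha vert d1.
Proof.
move=> hev v01.
set N := #|D|.
have /trajectP[k kN d1E] := inW d0 d1.
case: (posnP k) => [k0|k0]; first by rewrite d1E k0.
set v := vert d0.
set A := map vert (traject f (f d0) k.-1).
set B := map vert (traject f (iter k.+1 f d0) (N - k.+1)).
have tE : traject f d0 N = (d0 :: traject f (f d0) k.-1) ++
                          (d1 :: traject f (iter k.+1 f d0) (N - k.+1)).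
  rewrite {1}(_ : N = k + (N - k)); last by lia.
  rewrite trajectD; congr (_ ++ _).
    by rewrite -{1}(prednK k0).
  rewrite (_ : N - k = (N - k.+1).+1); last by lia.
  by rewrite trajectS d1E.
have t1E : traject f d1 N = (d1 :: traject f (iter k.+1 f d0) (N - k.+1)) ++
                           (d0 :: traject f (f d0) k.-1).
  rewrite {1}(_ : N = (N - k) + k); last by lia.
  rewrite trajectD; congr (_ ++ _).
    rewrite (_ : N - k = (N - k.+1).+1); last by lia.
    by rewrite trajectS d1E.
  rewrite d1E -iterD subnK ?(ltnW kN) // iterN -{1}(prednK k0) //.
have tv : map vert (traject f d0 N) = v :: A ++ v :: B.
  by rewrite tE map_cat /= -v01.
have w0 : walk_visits sigma alpha vert d0 = v :: A ++ v :: B ++ [:: v].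
  by rewrite walkE tE map_cat /= -v01 rcons_cat /= -cats1.
have w1 : walk_visits sigma alpha vert d1 = v :: B ++ v :: A ++ [:: v].
  by rewrite walkE t1E map_cat /= -v01 rcons_cat /= -cats1.
have vk : vert (iter k f d0) = vert d0 by rewrite -d1E.
have disj : forall z, z \in A -> z \in B -> z = v.
  move=> z /mapP[a /trajectP[j jk ->] ->] /mapP[b /trajectP[l lN ->]] /esym vjl.
  rewrite -iterSr -iterD in vjl *.
  apply: (F2 k0 kN vk _ _ _ (esym vjl)); lia.
rewrite !iTE w0 w1 !cz_decomp //; last by move=> z zB zA; apply: disj.
apply: iTs_swap.
- case=> [z|//] /cz_some/andP[zA zv] /cz_some/andP[zB _].
  by move: zv; rewrite (disj z zA zB) inE eqxx.
- by rewrite cz_cntN cz_cntS.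
- by rewrite cz_cntN cz_cntS.
rewrite !cz_cntS.
set SA := [set z | _ & _]; set SB := [set z | _ & _].
have cov : SA :|: SB = [set~ v].
  apply/setP => z; rewrite !inE.
  case: (eqVneq z v) => [->|zv] /=; first by rewrite !andbF.
  have [d dz] := vsurj z.
  have := map_f vert (inW d0 d); rewrite dz tv !in_cons mem_cat in_cons (negbTE zv) /=.
  by rewrite !andbT.
have cap : SA :&: SB = set0.
  apply/setP => z; rewrite !inE; apply/negbTE; apply/negP => /andP[/andP[zA zv] /andP[zB _]].
  by move: zv; rewrite (disj z zA zB) eqxx.
have sum : #|SA| + #|SB| = (n + m).-1.
  have := cardsU SA SB; rewrite cov cap cards0 subn0 cardsC1 card_sum !card_ord; lia.
have npos : 0 < n + m by rewrite card; lia.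
have oddS : odd (#|SA| + #|SB|).
  by move: hev; rewrite sum -{1}(prednK npos) /= negbK.
rewrite oddM; move: oddS; rewrite oddD.
by case: (odd #|SA|); case: (odd #|SB|).
Qed.

End Main.

Theorem mainTheorem2 (n m : nat) (D : finType) (sigma alpha : D -> D)
    (vert : D -> 'I_n + 'I_m) :
  is_plane_btree sigma alpha vert -> ~~ odd (n + m) ->
  forall (i : 'I_n) (d0 d1 : D), vert d0 = inl i -> vert d1 = inl i ->
  iT sigma alpha vert d0 = iT sigma alpha vert d1.
Proof.
move=> [injs ainv vsig [vconn vsurj _ conn card]] hev i d0 d1 v0 v1.
apply: main_sec => //; by rewrite v0 v1.
Qed.
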